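(* Let $F$ be a non-Archimedean local field with $\mathrm{char}(F)\neq2$, $K$ an étale $F$-algebra of degree $2$, and $L_K=\mathcal{O}_K\times\mathcal{O}_F\times\mathcal{O}_F\subseteq V_K$. Then $\mathrm{sn}_F(\mathrm{O}(L_K))=\mathrm{sn}_F(\mathrm{SO}(L_K))$, and this group equals $F^\times\bmod(F^\times)^2$ if $K/F$ is a ramified quadratic field extension, and $\mathcal{O}_F^\times\bmod(F^\times)^2$ otherwise (i.e. if $K$ is an unramified field extension or $K=F\times F$).
   Context: An étale $F$-algebra of degree $2$ is a quadratic field extension of $F$ or $F\times F$; $\alpha'$ denotes the conjugate of $\alpha\in K$, $\mathrm{N}_{K/F}(\alpha)=\alpha\alpha'$, and $\mathcal{O}_K$ is the ring of integers ($\mathcal{O}_F\times\mathcal{O}_F$ if $K=F\times F$). $V_K=K\oplus F\oplus F$ with quadratic form $q(\alpha,b,c)=\mathrm{N}_{K/F}(\alpha)-bc$. The spinor norm $\mathrm{sn}_F\colon\mathrm{O}(V)\to F^\times/(F^\times)^2$ is the unique homomorphism sending the reflection $\tau_a(v)=v-2\frac{\langle a,v\rangle}{\langle a,a\rangle}a$ ($q(a)\neq 0$, $\langle v,v\rangle=2q(v)$) to $q(a)$ mod squares. $\mathrm{O}(L_K)$, $\mathrm{SO}(L_K)$ denote the elements of $\mathrm{O}(V_K)$, $\mathrm{SO}(V_K)$ preserving $L_K$. *)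

(* Defs.v *)
From mathcomp Require Import all_boot all_order all_algebra.
Set Implicit Arguments. Unset Strict Implicit. Unset Printing Implicit Defensive.
Import Order.TTheory GRing.Theory Num.Theory.
Local Open Scope ring_scope.

Section LocalField.
Variable F : fieldType.

(** A normalized discrete valuation v : F^x ->> Z (the value at 0 is irrelevant). *)
Definition is_dval (v : F -> int) : Prop :=
  [/\ forall x y, x != 0 -> y != 0 -> v (x * y) = v x + v y,
      forall x y, x != 0 -> y != 0 -> x + y != 0 ->
        (v x <= v (x + y)) \/ (v y <= v (x + y)) &
      exists pi, pi != 0 /\ v pi = 1].

(** x lies in pi^n O_F *)
Definition vge (v : F -> int) (x : F) (n : int) : bool := (x == 0) || (n <= v x).
Definition intF (v : F -> int) (x : F) : bool := vge v x 0.
Definition unitF (v : F -> int) (x : F) : bool := (x != 0) && (v x == 0).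

Definition v_complete (v : F -> int) : Prop :=
  forall u : nat -> F,
    (forall N : int, exists M, forall m n, (M <= m)%N -> (M <= n)%N -> vge v (u m - u n) N) ->
    exists l, forall N : int, exists M, forall n, (M <= n)%N -> vge v (u n - l) N.

(** the residue field O_F / m_F is finite *)
Definition finite_residue (v : F -> int) : Prop :=
  exists s : seq F, forall x, intF v x -> exists2 y, y \in s & vge v (x - y) 1.

Definition nonarch_local_field (v : F -> int) : Prop :=
  [/\ is_dval v, v_complete v & finite_residue v].

(** The etale quadratic algebra K = F[t]/(t^2 - d), d != 0; alpha = a + b sqrt d. *)
Definition normK (d a b : F) : F := a ^+ 2 - d * b ^+ 2.
Definition traceK (a : F) : F := 2 * a.
Definition K_is_field (d : F) : Prop := ~ exists y : F, y ^+ 2 = d.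
(** O_K: elements whose characteristic polynomial t^2 - tr t + N has coefficients in O_F *)
Definition in_OK (v : F -> int) (d a b : F) : bool :=
  intF v (traceK a) && intF v (normK d a b).
(** K/F is a ramified quadratic field extension: ramification index 2, i.e. the
    extended valuation v_K(alpha) = v(N alpha)/2 takes a non-integral value. *)
Definition K_ramified (v : F -> int) (d : F) : Prop :=
  K_is_field d /\ exists a b : F, (a != 0 \/ b != 0) /\ odd `|v (normK d a b)|%N.

(** V_K = K + F + F, vectors (a, b, c, e) with alpha = a + b sqrt d *)
Definition cf (x : 'rV[F]_4) (k : nat) : F := x ord0 (inord k).
Definition qform (d : F) (x : 'rV[F]_4) : F :=
  normK d (cf x 0) (cf x 1) - cf x 2 * cf x 3.
(** <u,w> with <w,w> = 2 q(w) *)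
Definition bform (d : F) (u w : 'rV[F]_4) : F := qform d (u + w) - qform d u - qform d w.
Definition refl (d : F) (a w : 'rV[F]_4) : 'rV[F]_4 :=
  w - (2 * bform d a w / bform d a a) *: a.

Definition inL (v : F -> int) (d : F) (x : 'rV[F]_4) : bool :=
  [&& in_OK v d (cf x 0) (cf x 1), intF v (cf x 2) & intF v (cf x 3)].

Definition OL (v : F -> int) (d : F) (g : 'M[F]_4) : Prop :=
  [/\ g \in unitmx,
      forall x, qform d (x *m g) = qform d x &
      forall x, inL v d (x *m g) = inL v d x].
Definition SOL (v : F -> int) (d : F) (g : 'M[F]_4) : Prop :=
  OL v d g /\ \det g = 1.

(** x in F^x lies in (the preimage in F^x of) sn_F(G): some g in G is a product of
    reflections tau_{a_1} ... tau_{a_k} with x = q(a_1)...q(a_k) mod squares. *)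
Definition sn_image (d : F) (G : 'M[F]_4 -> Prop) (x : F) : Prop :=
  x != 0 /\ exists g, G g /\
    exists s : seq 'rV[F]_4,
      [/\ all (fun a => qform d a != 0) s,
          forall w, w *m g = foldr (refl d) w s &
          exists y, y != 0 /\ x = (\prod_(a <- s) qform d a) * y ^+ 2].

End LocalField.

(* Main.v *)
From HB Require Import structures.
Require Import Defs.
From mathcomp Require Import all_boot all_order all_algebra.
From mathcomp Require Import ring zify.
From Stdlib Require Import Classical.
Set Implicit Arguments. Unset Strict Implicit. Unset Printing Implicit Defensive.
Import Order.TTheory GRing.Theory Num.Theory.
Local Open Scope ring_scope.

Section Val.
Variable F : fieldType.
Variable v : F -> int.
Hypothesis Hv : is_dval v.

Lemma vM x y : x != 0 -> y != 0 -> v (x * y) = v x + v y.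
Proof. by move: Hv; rewrite /is_dval => -[h _ _]; apply: h. Qed.

Lemma v1 : v 1 = 0.
Proof.
have h := vM (oner_neq0 F) (oner_neq0 F); rewrite mulr1 in h.
by apply/(addrI (v 1)); rewrite addr0 -h.
Qed.

Lemma vV x : x != 0 -> v x^-1 = - v x.
Proof.
move=> x0; have := vM x0 (invr_neq0 x0); rewrite mulfV // v1; lia.
Qed.

Lemma vX x n : x != 0 -> v (x ^+ n) = v x *+ n.
Proof.
move=> x0; elim: n => [|n IH]; first by rewrite expr0 v1.
by rewrite exprS vM ?expf_neq0 // IH mulrS.
Qed.

Lemma vN x : x != 0 -> v (- x) = v x.
Proof.
move=> x0; have h : v ((-x) ^+ 2) = v (x ^+ 2) by rewrite sqrrN.
move: h; rewrite !vX ?oppr_eq0 // !mulr2n; lia.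
Qed.

Lemma vge0 n : vge v 0 n.
Proof. by rewrite /vge eqxx. Qed.

Lemma vgeE x n : x != 0 -> vge v x n = (n <= v x).
Proof. by move=> x0; rewrite /vge (negbTE x0). Qed.

Lemma vge_le x m n : n <= m -> vge v x m -> vge v x n.
Proof.
move=> nm; rewrite /vge; case: (x == 0) => //= h; exact: le_trans nm h.
Qed.

Lemma vgeN x n : vge v (- x) n = vge v x n.
Proof.
case: (eqVneq x 0) => [->|x0]; first by rewrite oppr0.
by rewrite !vgeE ?oppr_eq0 // vN.
Qed.

Lemma vgeD x y n : vge v x n -> vge v y n -> vge v (x + y) n.
Proof.
case: (eqVneq x 0) => [->|x0]; first by rewrite add0r.
case: (eqVneq y 0) => [->|y0]; first by rewrite addr0.
case: (eqVneq (x + y) 0) => [->|s0]; first by rewrite vge0.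
rewrite !vgeE // => hx hy.
move: Hv; rewrite /is_dval => -[_ /(_ x y x0 y0 s0) [h|h] _]; [exact: le_trans hx h|exact: le_trans hy h].
Qed.

Lemma vgeB x y n : vge v x n -> vge v y n -> vge v (x - y) n.
Proof. by move=> hx hy; apply: vgeD => //; rewrite vgeN. Qed.

Lemma vgeM x y m n : vge v x m -> vge v y n -> vge v (x * y) (m + n).
Proof.
case: (eqVneq x 0) => [->|x0]; first by move=> _ _; rewrite mul0r vge0.
case: (eqVneq y 0) => [->|y0]; first by move=> _ _; rewrite mulr0 vge0.
rewrite !vgeE ?mulf_neq0 // vM //; exact: lerD.
Qed.

Lemma vge_eq0 x : (forall n, vge v x n) -> x = 0.
Proof.
case: (eqVneq x 0) => // x0 /(_ (v x + 1)); rewrite vgeE //.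
by lia.
Qed.

Lemma v2 : (2:F) != 0 -> 0 <= v 2.
Proof.
move=> h; have := @vgeD 1 1 0; rewrite !vgeE ?oner_neq0 ?v1 //.
by move/(_ (lexx _) (lexx _)).
Qed.

Lemma exists_v (m : int) : exists y, y != 0 /\ v y = m.
Proof.
move: Hv; rewrite /is_dval => -[_ _ [pi [pi0 vpi]]].
case: m => k.
  exists (pi ^+ k); split; first exact: expf_neq0.
  by rewrite vX // vpi; lia.
exists (pi ^+ k.+1)^-1; split; first by rewrite invr_eq0 expf_neq0.
by rewrite vV ?expf_neq0 // vX // vpi NegzE; lia.
Qed.

End Val.

Section Hensel.
Variable F : fieldType.
Variable v : F -> int.
Hypothesis Hv : is_dval v.
Hypothesis Hc : v_complete v.

Lemma vge1 : vge v 1 0.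
Proof. by rewrite vgeE ?oner_neq0 // v1. Qed.

Lemma vge1_1 : ~~ vge v 1 1.
Proof. by rewrite vgeE ?oner_neq0 // v1. Qed.

Lemma unit_1sub t : vge v t 1 -> (1 - t != 0) /\ v (1 - t) = 0.
Proof.
move=> ht.
have t0 : vge v t 0 by apply: vge_le ht.
have h1 : 1 - t != 0.
  apply/eqP => e; move: ht; have -> : t = 1 by apply/eqP; rewrite -subr_eq0 -oppr_eq0 opprB e.
  by move/negP: vge1_1.
split => //.
have a : vge v (1 - t) 0 by apply: (vgeB Hv) => //; apply: vge1.
have b : ~~ vge v (1 - t) 1.
  apply/negP => h; move/negP: vge1_1; apply.
  by have := vgeD Hv h ht; rewrite subrK.
move: a b; rewrite !vgeE //; lia.
Qed.

Variable c : F.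
Hypothesis hc : vge v c 1.

Fixpoint useq n := match n with 0 => 1 | n'.+1 => 1 - c / useq n' end.

Lemma useq_unit n : useq n != 0 /\ v (useq n) = 0.
Proof.
elim: n => [|n [h0 h1]] /=; first by rewrite oner_neq0 v1.
apply: unit_1sub.
have -> : (1 : int) = 1 + 0 by [].
apply: vgeM => //; rewrite vgeE ?invr_eq0 // vV // h1 //.
Qed.

Lemma useq_diff n : vge v (useq n.+1 - useq n) n.+1.
Proof.
elim: n => [|n IH].
  by rewrite /= divr1 addrC addKr vgeN.
have [a0 _] := useq_unit n; have [b0 b1] := useq_unit n.+1.
have -> : useq n.+2 - useq n.+1 = c * (useq n.+1 - useq n) * (useq n * useq n.+1)^-1.
  have -> : useq n.+2 - useq n.+1 = (1 - c / useq n.+1) - (1 - c / useq n) by [].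
  by field; rewrite a0 b0.
have hy : vge v (useq n * useq n.+1)^-1 0.
  rewrite vgeE ?invr_eq0 ?mulf_neq0 // vV ?mulf_neq0 // vM // b1.
  by have [_ ->] := useq_unit n.
have h := vgeM Hv (vgeM Hv hc IH) hy.
apply: vge_le h; lia.
Qed.

Lemma useq_cauchy n k : vge v (useq (n + k) - useq n) n.+1.
Proof.
elim: k => [|k IH]; first by rewrite addn0 subrr vge0.
have -> : useq (n + k.+1) - useq n = (useq (n + k).+1 - useq (n + k)) + (useq (n + k) - useq n).
  by rewrite addnS addrA subrK.
apply: (vgeD Hv) => //; apply: vge_le (useq_diff _); lia.
Qed.

Lemma hensel_root : exists l, l ^+ 2 - l + c = 0.
Proof.
have [l hl] : exists l, forall N : int, exists M, forall n, (M <= n)%N -> vge v (useq n - l) N.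
  apply: Hc => N; exists `|N|%N => m n hm hn.
  case: (leqP n m) => [nm|mn].
    rewrite -(subnKC nm); apply: vge_le (useq_cauchy _ _); lia.
  rewrite -(subnKC (ltnW mn)) -opprB vgeN //; apply: vge_le (useq_cauchy _ _); lia.
exists l; apply: vge_eq0 => N.
have [M hM] := hl (Posz `|N|%N).
have h1 := hM M (leqnn _); have h2 := hM M.+1 (leqnSn _).
have [u0 u1] := useq_unit M.
have -> : l ^+ 2 - l + c = (l - 1) * (l - useq M) + useq M * (l - useq M.+1).
  have -> : useq M.+1 = 1 - c / useq M by [].
  by field; rewrite u0.
have ui : vge v (useq M) 0 by rewrite vgeE // u1.
have lu : vge v (l - useq M) `|N|%N by rewrite -opprB vgeN.
have lu' : vge v (l - useq M.+1) `|N|%N by rewrite -opprB vgeN.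
have l1 : vge v (l - 1) 0.
  have -> : l - 1 = (l - useq M) + (useq M - 1) by rewrite addrA subrK.
  apply: (vgeD Hv); first by apply: vge_le lu.
  by apply: (vgeB Hv) => //; apply: vge1.
apply: (vgeD Hv).
  apply: vge_le (vgeM Hv l1 lu); lia.
apply: vge_le (vgeM Hv ui lu'); lia.
Qed.

End Hensel.

Section Trace.
Variable F : fieldType.
Variable v : F -> int.
Hypothesis Hv : is_dval v.
Hypothesis Hc : v_complete v.
Variable d : F.
Hypothesis Kf : K_is_field d.
Hypothesis two0 : (2 : F) != 0.

Lemma trace_int a b : intF v (normK d a b) -> intF v (traceK a).
Proof.
move=> hN; rewrite /intF /traceK.
case hT: (vge v (2 * a) 0) => //; exfalso.
have a0 : a != 0 by apply: contraFN hT => /eqP ->; rewrite mulr0 vge0.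
have ta0 : 2 * a != 0 by rewrite mulf_neq0.
have vT : v (2 * a) < 0 by move: hT; rewrite vgeE //; lia.
case: (eqVneq b 0) => [b0|b0].
  move: hN; rewrite /intF /normK b0 expr0n /= mulr0 subr0 vgeE ?expf_neq0 // vX // => h.
  move: vT; rewrite vM // => h2; have := v2 Hv two0; lia.
pose cc := normK d a b / (2 * a) ^+ 2.
have hcc : vge v cc 1.
  case: (eqVneq (normK d a b) 0) => [N0|N0]; first by rewrite /cc N0 mul0r vge0.
  move: hN; rewrite /intF /cc !vgeE ?mulf_neq0 ?invr_eq0 ?expf_neq0 // vM ?invr_eq0 ?expf_neq0 //.
  rewrite vV ?expf_neq0 // vX //; lia.
have [l hl] := hensel_root Hv Hc hcc.
apply: Kf; exists ((2 * a * l - a) / b).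
have e : (2 * a * l) ^+ 2 - 2 * a * (2 * a * l) + normK d a b = 0.
  have -> : (2 * a * l) ^+ 2 - 2 * a * (2 * a * l) + normK d a b = (2 * a) ^+ 2 * (l ^+ 2 - l + cc).
    by rewrite /cc; field; rewrite a0 two0.
  by rewrite hl mulr0.
move: e; rewrite /normK => e.
apply/eqP; rewrite -(subr_eq0) -[X in X == _](@mulfK _ (b ^+ 2)) ?expf_neq0 //.
rewrite mulf_eq0; apply/orP; left; apply/eqP; rewrite -e; field; exact: b0.
Qed.

Lemma inOK_field a b : in_OK v d a b = intF v (normK d a b).
Proof.
rewrite /in_OK; case h: (intF v (normK d a b)); last by rewrite andbF.
by rewrite andbT (trace_int h).
Qed.

End Trace.

Definition Kt (F : fieldType) (d : F) : Type := (F * F)%type.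
HB.instance Definition _ (F : fieldType) (d : F) := GRing.Zmodule.copy (Kt d) (F * F)%type.

Section KDef.
Variable F : fieldType.
Variable d : F.
Definition kmul (x y : Kt d) : Kt d := (x.1 * y.1 + d * x.2 * y.2, x.1 * y.2 + x.2 * y.1).
Definition kone : Kt d := (1, 0).
Lemma kmulA : associative kmul.
Proof. by move=> [a b] [c e] [f g]; rewrite /kmul /=; congr pair; ring. Qed.
Lemma kmulC : commutative kmul.
Proof. by move=> [a b] [c e]; rewrite /kmul /=; congr pair; ring. Qed.
Lemma kmul1 : left_id kone kmul.
Proof. by move=> [a b]; rewrite /kmul /=; congr pair; ring. Qed.
Lemma kmulD : left_distributive kmul +%R.
Proof.
move=> [a b] [c e] [f g].
have -> : ((a, b) + (c, e) : Kt d) = (a + c, b + e) by [].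
have -> : ((a * f + d * b * g, a * g + b * f) + (c * f + d * e * g, c * g + e * f) : Kt d)
  = (a * f + d * b * g + (c * f + d * e * g), a * g + b * f + (c * g + e * f)) by [].
by rewrite /kmul /=; congr pair; ring.
Qed.
Lemma kone0 : kone != 0.
Proof. by apply/eqP => -[] /eqP; rewrite oner_eq0. Qed.
End KDef.

HB.instance Definition _ (F : fieldType) (d : F) :=
  GRing.Zmodule_isComNzRing.Build (Kt d) (@kmulA F d) (@kmulC F d) (@kmul1 F d) (@kmulD F d) (@kone0 F d).

Section KTh.
Variable F : fieldType.
Variable d : F.
Local Notation K := (Kt d).

Definition kF (c : F) : K := (c, 0).
Definition kconj (x : K) : K := (x.1, - x.2).

Lemma kE1 (x y : K) : (x * y).1 = x.1 * y.1 + d * x.2 * y.2. Proof. by []. Qed.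
Lemma kE2 (x y : K) : (x * y).2 = x.1 * y.2 + x.2 * y.1. Proof. by []. Qed.
Lemma kaddE1 (x y : K) : (x + y).1 = x.1 + y.1. Proof. by []. Qed.
Lemma kaddE2 (x y : K) : (x + y).2 = x.2 + y.2. Proof. by []. Qed.
Lemma koppE1 (x : K) : (- x).1 = - x.1. Proof. by []. Qed.
Lemma koppE2 (x : K) : (- x).2 = - x.2. Proof. by []. Qed.
Lemma k1E : (1 : K) = (1, 0). Proof. by []. Qed.
Lemma k0E : (0 : K) = (0, 0). Proof. by []. Qed.

Lemma kext (x y : K) : x.1 = y.1 -> x.2 = y.2 -> x = y.
Proof. by case: x y => [a b] [c e] /= -> ->. Qed.

Lemma kconjD x y : kconj (x + y) = kconj x + kconj y.
Proof. by apply: kext => //=; rewrite /kconj /= opprD. Qed.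
Lemma kconjN x : kconj (- x) = - kconj x.
Proof. by []. Qed.
Lemma kconjB x y : kconj (x - y) = kconj x - kconj y.
Proof. by rewrite kconjD kconjN. Qed.
Lemma kconjM x y : kconj (x * y) = kconj x * kconj y.
Proof. by apply: kext; rewrite /kconj /= ?kE1 ?kE2 /=; ring. Qed.
Lemma kconjK x : kconj (kconj x) = x.
Proof. by case: x => a b; rewrite /kconj /= opprK. Qed.
Lemma kconjF c : kconj (kF c) = kF c.
Proof. by rewrite /kconj /kF /= oppr0. Qed.
Lemma kconj1 : kconj 1 = 1.
Proof. exact: (kconjF 1). Qed.
Lemma kconj0 : kconj 0 = 0.
Proof. exact: (kconjF 0). Qed.
Lemma kFM a b : kF (a * b) = kF a * kF b.
Proof. by apply: kext; rewrite /kF ?kE1 ?kE2 /=; ring. Qed.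
Lemma kFD a b : kF (a + b) = kF a + kF b.
Proof. by apply: kext; rewrite /kF /= ?addr0. Qed.
Lemma kFN a : kF (- a) = - kF a.
Proof. by apply: kext; rewrite /kF /= ?oppr0. Qed.
Lemma kF1 : kF 1 = 1. Proof. by []. Qed.
Lemma kF0 : kF 0 = 0. Proof. by []. Qed.
Lemma knorm (x : K) : x * kconj x = kF (normK d x.1 x.2).
Proof. by apply: kext; rewrite /kF /normK ?kE1 ?kE2 /=; ring. Qed.

Record m2 := M2 { e11 : K; e12 : K; e21 : K; e22 : K }.
Definition mmul (A B : m2) : m2 :=
  M2 (e11 A * e11 B + e12 A * e21 B) (e11 A * e12 B + e12 A * e22 B)
     (e21 A * e11 B + e22 A * e21 B) (e21 A * e12 B + e22 A * e22 B).
Definition madj (A : m2) : m2 := M2 (e22 A) (- e12 A) (- e21 A) (e11 A).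
Definition mstar (A : m2) : m2 := M2 (kconj (e11 A)) (kconj (e21 A)) (kconj (e12 A)) (kconj (e22 A)).
Definition mdet (A : m2) : K := e11 A * e22 A - e12 A * e21 A.
Definition mscale (k : K) (A : m2) : m2 := M2 (k * e11 A) (k * e12 A) (k * e21 A) (k * e22 A).

Lemma madj_mul A B : madj (mmul A B) = mmul (madj B) (madj A).
Proof. by case: A B => [a b c e] [f g h i]; rewrite /madj /mmul /=; congr M2; ring. Qed.
Lemma madjK A : madj (madj A) = A.
Proof. by case: A => [a b c e]; rewrite /madj /= !opprK. Qed.
Lemma madj_scale k A : madj (mscale k A) = mscale k (madj A).
Proof. by case: A => [a b c e]; rewrite /madj /mscale /=; congr M2; ring. Qed.
Lemma mstar_mul A B : mstar (mmul A B) = mmul (mstar B) (mstar A).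
Proof.
case: A B => [a b c e] [f g h i]; rewrite /mstar /mmul /=.
by congr M2; rewrite !kconjD !kconjM; ring.
Qed.
Lemma mstarK A : mstar (mstar A) = A.
Proof. by case: A => [a b c e]; rewrite /mstar /= !kconjK. Qed.
Lemma mstar_adj A : mstar (madj A) = madj (mstar A).
Proof. by case: A => [a b c e]; rewrite /mstar /madj /= !kconjN. Qed.
Lemma mdet_mul A B : mdet (mmul A B) = mdet A * mdet B.
Proof. by case: A B => [a b c e] [f g h i]; rewrite /mdet /mmul /=; ring. Qed.
Lemma mdet_adj A : mdet (madj A) = mdet A.
Proof. by case: A => [a b c e]; rewrite /mdet /madj /=; ring. Qed.
Lemma mdet_star A : mdet (mstar A) = kconj (mdet A).
Proof. by case: A => [a b c e]; rewrite /mdet /mstar /= kconjB !kconjM; ring. Qed.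
Lemma mscale_mull k A B : mmul (mscale k A) B = mscale k (mmul A B).
Proof. by case: A B => [a b c e] [f g h i]; rewrite /mscale /mmul /=; congr M2; ring. Qed.
Lemma mscale_mulr k A B : mmul A (mscale k B) = mscale k (mmul A B).
Proof. by case: A B => [a b c e] [f g h i]; rewrite /mscale /mmul /=; congr M2; ring. Qed.
Lemma mscaleM k l A : mscale k (mscale l A) = mscale (k * l) A.
Proof. by case: A => [a b c e]; rewrite /mscale /=; congr M2; ring. Qed.
Lemma mmulA A B C : mmul A (mmul B C) = mmul (mmul A B) C.
Proof. by case: A B C => [a b c e] [f g h i] [j k l m]; rewrite /mmul /=; congr M2; ring. Qed.

End KTh.

Section Rf.
Variable F : fieldType.
Variable d : F.
Hypothesis two0 : (2 : F) != 0.
Local Notation K := (Kt d).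

Lemma cfD (x y : 'rV[F]_4) k : cf (x + y) k = cf x k + cf y k.
Proof. by rewrite /cf mxE. Qed.
Lemma cfB (x y : 'rV[F]_4) k : cf (x - y) k = cf x k - cf y k.
Proof. by rewrite /cf !mxE. Qed.
Lemma cfZ t (x : 'rV[F]_4) k : cf (t *: x) k = t * cf x k.
Proof. by rewrite /cf mxE. Qed.

Definition bf (a w : 'rV[F]_4) : F :=
  2 * (cf a 0 * cf w 0 - d * cf a 1 * cf w 1) - (cf a 2 * cf w 3 + cf a 3 * cf w 2).

Lemma bformE a w : bform d a w = bf a w.
Proof. by rewrite /bform /qform /normK /bf !cfD; ring. Qed.

Lemma bf_aa a : bf a a = 2 * qform d a.
Proof. by rewrite /bf /qform /normK; ring. Qed.

Lemma refl_cf a w k : qform d a != 0 ->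
  cf (refl d a w) k = cf w k - bf a w / qform d a * cf a k.
Proof.
move=> qa; rewrite /refl cfB cfZ !bformE bf_aa; congr (_ - _ * _).
by field; rewrite qa two0.
Qed.

Definition herm (w : 'rV[F]_4) : m2 d :=
  M2 (kF d (cf w 2)) ((cf w 0, cf w 1) : K) (kconj ((cf w 0, cf w 1) : K)) (kF d (cf w 3)).

Lemma mstar_herm w : mstar (herm w) = herm w.
Proof. by rewrite /mstar /herm /= !kconjF kconjK. Qed.

Lemma mdet_herm w : mdet (herm w) = kF d (- qform d w).
Proof.
apply: kext; rewrite /mdet /herm /kF /kconj /qform /normK /= ?(kE1, kE2, kaddE1, kaddE2, koppE1, koppE2) /=; ring.
Qed.

Lemma herm_refl a w : qform d a != 0 ->
  herm (refl d a w) = mscale (kF d (qform d a)^-1) (mmul (herm a) (mmul (madj (herm w)) (herm a))).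
Proof.
move=> qa; rewrite /herm /mscale /mmul /madj /=.
congr M2; apply: kext;
  rewrite /kF /kconj /= ?(kE1, kE2, kaddE1, kaddE2, koppE1, koppE2) /= ?refl_cf //;
  rewrite /bf /qform /normK in qa *; by field.
Qed.


Definition act (P : m2 d) (lam : F) (n : nat) (M : m2 d) :=
  mscale (kF d lam^-1) (mmul P (mmul (iter n (@madj F d) M) (mstar P))).

Definition m1 : m2 d := M2 1 0 0 1.

Lemma act_base M : act m1 1 0 M = M.
Proof.
case: M => a b c e; rewrite /act /m1 /mscale /mmul /mstar invr1 /= kconj0 kconj1 kF1.
by congr M2; ring.
Qed.

Lemma refl_prod s : all (fun a => qform d a != 0) s ->
  exists P, mdet P = kF d ((-1) ^+ size s * \prod_(a <- s) qform d a) /\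
   forall w, herm (foldr (refl d) w s) = act P (\prod_(a <- s) qform d a) (size s) (herm w).
Proof.
elim: s => [|a s IH] /=.
  move=> _; exists m1; split; first by rewrite big_nil expr0 mulr1 /mdet /m1 /=; apply: kext => /=; ring.
  by move=> w; rewrite big_nil act_base.
case/andP => qa /IH [P [dP hP]].
set lam := \prod_(b <- s) qform d b.
exists (mmul (herm a) (madj (mstar P))); split.
  rewrite mdet_mul mdet_adj mdet_star dP kconjF mdet_herm -kFM big_cons; congr kF.
  by rewrite exprS; ring.
move=> w; rewrite herm_refl // hP big_cons -/lam /act iterS.
rewrite mstar_mul mstar_adj mstarK mstar_herm.
rewrite madj_scale !madj_mul.
rewrite mscale_mull mscale_mulr mscaleM -kFM -invfM.
by rewrite !mmulA.
Qed.

End Rf.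

Section Vec.
Variable F : fieldType.

Definition mk4 (a b c e : F) : 'rV[F]_4 := \row_(j < 4) nth 0 [:: a; b; c; e] j.
Lemma cf_mk4_0 a b c e : cf (mk4 a b c e) 0 = a. Proof. by rewrite /cf mxE inordK. Qed.
Lemma cf_mk4_1 a b c e : cf (mk4 a b c e) 1 = b. Proof. by rewrite /cf mxE inordK. Qed.
Lemma cf_mk4_2 a b c e : cf (mk4 a b c e) 2 = c. Proof. by rewrite /cf mxE inordK. Qed.
Lemma cf_mk4_3 a b c e : cf (mk4 a b c e) 3 = e. Proof. by rewrite /cf mxE inordK. Qed.
Definition cf_mk4 := (cf_mk4_0, cf_mk4_1, cf_mk4_2, cf_mk4_3).

Lemma iter_madj d n (M : m2 d) : iter n (@madj F d) M = if odd n then madj M else M.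
Proof. by elim: n => //= n ->; case: (odd n) => //=; rewrite madjK. Qed.

Lemma rowE4 (w : 'rV[F]_4) : w = mk4 (cf w 0) (cf w 1) (cf w 2) (cf w 3).
Proof.
apply/rowP => j; rewrite /mk4 /cf mxE.
by case: j => [[|[|[|[|j]]]] hj] //=; congr (w _ _); apply: val_inj; rewrite /= inordK.
Qed.

End Vec.

Lemma parity (z : int) : exists k, z = k + k \/ z = k + k + 1.
Proof.
exists (z %/ 2)%Z; have := divz_eq z 2; have := modz_ge0 z (isT : (2:int) != 0).
have := ltz_pmod z (isT : (0:int) < 2); lia.
Qed.

Lemma even_abs (z : int) : ~~ odd `|z|%N -> exists k, z = k + k.
Proof.
move=> h; have e := odd_double_half `|z|%N; rewrite (negbTE h) add0n in e.
exists (if (0 <= z) then Posz (`|z|%N./2) else - Posz (`|z|%N./2)).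
move: e; rewrite -muln2; case: (ifP _); lia.
Qed.

Section KN.
Variable F : fieldType.
Variable d : F.
Local Notation K := (Kt d).
Definition nK (x : K) := normK d x.1 x.2.
Lemma nKM x y : nK (x * y) = nK x * nK y.
Proof. by case: x y => a b [c e]; rewrite /nK /normK kE1 kE2 /=; ring. Qed.
Lemma nKconj x : nK (kconj x) = nK x.
Proof. by case: x => a b; rewrite /nK /normK /kconj /=; ring. Qed.
Lemma nK_det x y z w : nK (x * y - z * w) = nK x * nK y + nK z * nK w - 2 * (x * y * kconj (z * w)).1.
Proof.
case: x y z w => a b [c e] [f g] [h i].
rewrite /nK /normK /kconj ?(kE1, kE2, kaddE1, kaddE2, koppE1, koppE2) /=; ring.
Qed.
Lemma nKF c : nK (kF d c) = c ^+ 2.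
Proof. by rewrite /nK /normK /kF /=; ring. Qed.
Lemma nK_scale x c : nK (x * kF d c) = nK x * c ^+ 2.
Proof. by rewrite nKM nKF. Qed.
Lemma kscale1 x c : (x * kF d c).1 = x.1 * c.
Proof. by rewrite kE1 /kF /=; ring. Qed.
End KN.

Section FC.
Variable F : fieldType.
Variable v : F -> int.
Hypothesis Hv : is_dval v.
Hypothesis Hc : v_complete v.
Variable d : F.
Hypothesis two0 : (2 : F) != 0.
Hypothesis Kf : K_is_field d.
Hypothesis Hev : forall a b, (a != 0 \/ b != 0) -> ~~ odd `|v (normK d a b)|%N.
Local Notation K := (Kt d).

Lemma normK_eq0 a b : normK d a b = 0 -> a = 0 /\ b = 0.
Proof.
move=> e; case: (eqVneq b 0) => [b0|b0].
  by move: e; rewrite /normK b0 expr0n /= mulr0 subr0 => /eqP; rewrite expf_eq0 /= => /eqP.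
exfalso; apply: Kf; exists (a / b); move: e; rewrite /normK => /eqP.
rewrite subr_eq0 => /eqP e; rewrite expr_div_n e; field; exact: b0.
Qed.

Lemma nK_vge (p : K) lam (k : int) : lam != 0 -> v lam = k + k + 1 ->
  intF v (lam^-1 * nK p) -> vge v (nK p) (k + k + 2).
Proof.
move=> l0 vl hp; case: (eqVneq (nK p) 0) => [->|n0]; first exact: vge0.
have nz : p.1 != 0 \/ p.2 != 0.
  case: (eqVneq p.1 0) => h1; last by left.
  case: (eqVneq p.2 0) => h2; last by right.
  by move: n0; rewrite /nK h1 h2 /normK expr0n /= mulr0 subr0 eqxx.
have [j hj] := even_abs (Hev nz).
move: hp; rewrite /intF vgeE ?mulf_neq0 ?invr_eq0 // vM ?invr_eq0 // vV //.
rewrite vgeE //; rewrite /nK in n0 *; lia.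
Qed.

Lemma field_core (P : m2 d) lam : lam != 0 -> mdet P = kF d lam ->
  (forall p, p \in [:: e11 P; e12 P; e21 P; e22 P] -> intF v (lam^-1 * nK p)) ->
  exists k, v lam = k + k.
Proof.
move=> l0 dP hP.
have [k [e|o]] := parity (v lam); first by exists k.
exfalso.
have [t [t0 vt]] := exists_v Hv (k + 1).
have h11 := nK_vge l0 o (hP _ (mem_head _ _)).
have h12 : vge v (nK (e12 P)) (k + k + 2) by apply: nK_vge l0 o (hP _ _); rewrite !inE eqxx ?orbT.
have h21 : vge v (nK (e21 P)) (k + k + 2) by apply: nK_vge l0 o (hP _ _); rewrite !inE eqxx ?orbT.
have h22 : vge v (nK (e22 P)) (k + k + 2) by apply: nK_vge l0 o (hP _ _); rewrite !inE eqxx ?orbT.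
set g := e11 P * e22 P * kconj (e12 P * e21 P).
have hg : vge v (nK g) ((k + k + 2) + (k + k + 2) + ((k + k + 2) + (k + k + 2))).
  rewrite /g !nKM nKconj nKM; apply: (vgeM Hv); apply: (vgeM Hv) => //.
have t4 : (t ^+ 4)^-1 != 0 by rewrite invr_eq0 expf_neq0.
have vt4 : v (t ^+ 4)^-1 = - (k + 1) *+ 4 by rewrite vV ?expf_neq0 // vX // vt mulNrn.
have hg' : intF v (nK (g * kF d (t ^+ 4)^-1)).
  rewrite nK_scale /intF; have h := vgeM Hv hg (_ : vge v (((t ^+ 4)^-1) ^+ 2) (- (k + 1) *+ 8)).
  apply: vge_le (h _); first lia.
  rewrite vgeE ?expf_neq0 // vX // vt4; lia.
have := trace_int Hv Hc Kf two0 hg'; rewrite /traceK kscale1 /intF => htr.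
have htr2 : vge v (2 * g.1) ((k + 1) *+ 4).
  have -> : 2 * g.1 = 2 * (g.1 * (t ^+ 4)^-1) * t ^+ 4 by field; rewrite t0.
  have := vgeM Hv htr (_ : vge v (t ^+ 4) ((k + 1) *+ 4)).
  by rewrite add0r; apply; rewrite vgeE ?expf_neq0 // vX // vt.
have hdet := nK_det (e11 P) (e22 P) (e12 P) (e21 P).
have : vge v (nK (mdet P)) ((k + 1) *+ 4).
  rewrite /mdet hdet -/g; apply: (vgeB Hv) => //; apply: (vgeD Hv).
    by apply: vge_le (vgeM Hv h11 h22); lia.
  by apply: vge_le (vgeM Hv h12 h21); lia.
rewrite dP nKF vgeE ?expf_neq0 // vX // o; lia.
Qed.

End FC.

Section SC.
Variable F : fieldType.
Variable v : F -> int.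
Hypothesis Hv : is_dval v.

Lemma det_small x1 x2 x3 x4 (k : int) :
  [&& vge v x1 (k + 1), vge v x2 (k + 1), vge v x3 (k + 1) & vge v x4 (k + 1)] ->
  vge v (x1 * x4 - x2 * x3) (k + k + 2).
Proof.
case/and4P => h1 h2 h3 h4; apply: (vgeB Hv).
  by apply: vge_le (vgeM Hv h1 h4); lia.
by apply: vge_le (vgeM Hv h2 h3); lia.
Qed.

Lemma split_core x1 x2 x3 x4 y1 y2 y3 y4 lam : lam != 0 ->
  x1 * x4 - x2 * x3 = lam -> y1 * y4 - y2 * y3 = lam ->
  (forall x y, x \in [:: x1; x2; x3; x4] -> y \in [:: y1; y2; y3; y4] -> intF v (lam^-1 * (x * y))) ->
  exists k, v lam = k + k.
Proof.
move=> l0 dX dY hXY.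
have [k [e|o]] := parity (v lam); first by exists k.
exfalso.
have vl : ~~ vge v lam (k + k + 2) by rewrite vgeE // o; lia.
have [x hx nx] : exists2 x, x \in [:: x1; x2; x3; x4] & ~~ vge v x (k + 1).
  case hA: [&& vge v x1 (k + 1), vge v x2 (k + 1), vge v x3 (k + 1) & vge v x4 (k + 1)].
    by move: (det_small hA); rewrite dX (negbTE vl).
  move/negbT: hA; rewrite !negb_and => /or4P [h|h|h|h]; [exists x1|exists x2|exists x3|exists x4];
    by rewrite ?inE ?eqxx ?orbT.
have [y hy ny] : exists2 y, y \in [:: y1; y2; y3; y4] & ~~ vge v y (k + 1).
  case hA: [&& vge v y1 (k + 1), vge v y2 (k + 1), vge v y3 (k + 1) & vge v y4 (k + 1)].
    by move: (det_small hA); rewrite dY (negbTE vl).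
  move/negbT: hA; rewrite !negb_and => /or4P [h|h|h|h]; [exists y1|exists y2|exists y3|exists y4];
    by rewrite ?inE ?eqxx ?orbT.
have x0 : x != 0 by apply: contraNN nx => /eqP ->; rewrite vge0.
have y0 : y != 0 by apply: contraNN ny => /eqP ->; rewrite vge0.
have := hXY _ _ hx hy; rewrite /intF vgeE ?mulf_neq0 ?invr_eq0 //.
rewrite vM ?mulf_neq0 ?invr_eq0 // vM // vV //.
move: nx ny; rewrite !vgeE // => nx ny.
move: (v x) (v y) (v lam) nx ny o => a b c; clear; lia.
Qed.

Variable d s : F.
Hypothesis hs : s ^+ 2 = d.
Hypothesis s0 : s != 0.
Hypothesis two0 : (2 : F) != 0.
Local Notation K := (Kt d).

Definition pi1 (x : K) : F := x.1 + x.2 * s.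
Lemma pi1M x y : pi1 (x * y) = pi1 x * pi1 y.
Proof. by rewrite /pi1 kE1 kE2 -hs; ring. Qed.
Lemma pi1D x y : pi1 (x + y) = pi1 x + pi1 y.
Proof. by rewrite /pi1 kaddE1 kaddE2; ring. Qed.
Lemma pi1N x : pi1 (- x) = - pi1 x.
Proof. by rewrite /pi1 koppE1 koppE2; ring. Qed.
Lemma pi1B x y : pi1 (x - y) = pi1 x - pi1 y.
Proof. by rewrite pi1D pi1N. Qed.
Lemma pi1F c : pi1 (kF d c) = c.
Proof. by rewrite /pi1 /kF /= mul0r addr0. Qed.

Lemma root_int x y : intF v (x + y) -> intF v (x * y) -> intF v x.
Proof.
move=> hT hN; rewrite /intF; case: (eqVneq x 0) => [->|x0]; first exact: vge0.
rewrite vgeE //; case: (lerP 0 (v x)) => // hx.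
have e : x ^+ 2 = (x + y) * x - x * y by ring.
have h1 : vge v ((x + y) * x) (v x) by have := vgeM Hv hT (_ : vge v x (v x)); rewrite add0r; apply; rewrite vgeE.
have h2 : vge v (x * y) (v x) by apply: vge_le hN; move: (v x) hx => z; clear; lia.
have := vgeB Hv h1 h2; rewrite -e vgeE ?expf_neq0 // vX //.
move: (v x) hx => z; clear; lia.
Qed.

Lemma inOK_split a b : in_OK v d a b = intF v (a + b * s) && intF v (a - b * s).
Proof.
have eT : traceK a = (a + b * s) + (a - b * s) by rewrite /traceK; ring.
have eN : normK d a b = (a + b * s) * (a - b * s) by rewrite /normK -hs; ring.
rewrite /in_OK eT eN; apply/andP/andP => [[h1 h2]|[h1 h2]]; split.
- exact: root_int h1 h2.
- by apply: (root_int (y := a + b * s)); [rewrite addrC | rewrite mulrC].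
- by rewrite /intF; apply: (vgeD Hv).
- by rewrite /intF; have := vgeM Hv h1 h2; rewrite addr0.
Qed.

End SC.

Section Hd.
Variable F : fieldType.
Variable v : F -> int.
Hypothesis Hv : is_dval v.
Hypothesis Hc : v_complete v.
Variable d : F.
Hypothesis two0 : (2 : F) != 0.
Hypothesis d0 : d != 0.
Local Notation K := (Kt d).

Definition act0 (P : m2 d) lam (M : m2 d) := mscale (kF d lam^-1) (mmul P (mmul M (mstar P))).

Lemma hard_setup s : all (fun a => qform d a != 0) s -> ~~ odd (size s) ->
  exists P, [/\ mdet P = kF d (\prod_(a <- s) qform d a), \prod_(a <- s) qform d a != 0 &
   forall w, herm d (foldr (refl d) w s) = act0 P (\prod_(a <- s) qform d a) (herm d w)].
Proof.
move=> hs hev; have [P [dP hP]] := refl_prod two0 hs.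
exists P; split.
- by rewrite dP -signr_odd (negbTE hev) expr0 mul1r.
- rewrite prodf_seq_neq0; apply/allP => a ha /=; exact: (allP hs).
- by move=> w; rewrite hP /act iter_madj (negbTE hev).
Qed.

Lemma herm_entries w (A : m2 d) : herm d w = A ->
  [/\ cf w 2 = (e11 A).1, cf w 3 = (e22 A).1, e12 A = ((cf w 0, cf w 1) : K) & e21 A = kconj (e12 A)].
Proof. by move=> <-; rewrite /herm /=. Qed.

Lemma inL_entries w (A : m2 d) : herm d w = A -> inL v d w ->
  [/\ intF v (e11 A).1, intF v (e22 A).1 & in_OK v d (e12 A).1 (e12 A).2] /\ e21 A = kconj (e12 A).
Proof.
move=> /herm_entries [h2 h3 h0 h1]; rewrite /inL => /and3P [a b c].
split; last exact: h1; by rewrite -h2 -h3 h0 /=; split.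
Qed.

Lemma act_E11 (P : m2 d) lam :
  let A := act0 P lam (herm d (mk4 0 0 1 0)) in
  e11 A = kF d (lam^-1 * nK (e11 P)) /\ e22 A = kF d (lam^-1 * nK (e21 P)).
Proof.
rewrite /act0 /herm /mscale /mmul /mstar /= !cf_mk4 /nK /normK.
by split; apply: kext; rewrite /kF /kconj ?(kE1, kE2, kaddE1, kaddE2, koppE1, koppE2) /=; ring.
Qed.

Lemma act_E22 (P : m2 d) lam :
  let A := act0 P lam (herm d (mk4 0 0 0 1)) in
  e11 A = kF d (lam^-1 * nK (e12 P)) /\ e22 A = kF d (lam^-1 * nK (e22 P)).
Proof.
rewrite /act0 /herm /mscale /mmul /mstar /= !cf_mk4 /nK /normK.
by split; apply: kext; rewrite /kF /kconj ?(kE1, kE2, kaddE1, kaddE2, koppE1, koppE2) /=; ring.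
Qed.

Lemma inL_E11 : inL v d (mk4 0 0 1 0).
Proof. by rewrite /inL !cf_mk4 /in_OK /traceK /normK /intF expr0n /= !mulr0 subr0 !vge0 vge1. Qed.
Lemma inL_E22 : inL v d (mk4 0 0 0 1).
Proof. by rewrite /inL !cf_mk4 /in_OK /traceK /normK /intF expr0n /= !mulr0 subr0 !vge0 vge1. Qed.

Lemma hard_field s : K_is_field d ->
  (forall a b, (a != 0 \/ b != 0) -> ~~ odd `|v (normK d a b)|%N) ->
  all (fun a => qform d a != 0) s -> ~~ odd (size s) ->
  (forall w, inL v d w -> inL v d (foldr (refl d) w s)) ->
  exists k, v (\prod_(a <- s) qform d a) = k + k.
Proof.
move=> Kf Hev hs hev hL.
have [P [dP l0 hP]] := hard_setup hs hev.
set lam := \prod_(a <- s) qform d a in dP l0 hP *.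
apply: (field_core Hv Hc two0 Kf Hev l0 dP).
have [[a1 b1 _] _] := inL_entries (hP _) (hL _ inL_E11).
have [[a2 b2 _] _] := inL_entries (hP _) (hL _ inL_E22).
have [e1 e2] := act_E11 P lam; have [e3 e4] := act_E22 P lam.
move: a1 b1 a2 b2; rewrite e1 e2 e3 e4 /= => a1 b1 a2 b2.
by move=> p; rewrite !inE => /or4P [] /eqP ->.
Qed.

Section Split.
Variable s : F.
Hypothesis hs : s ^+ 2 = d.
Hypothesis s0 : s != 0.

Lemma kE1s (x y : K) : (x * y).1 = x.1 * y.1 + s ^+ 2 * x.2 * y.2.
Proof. by rewrite kE1 hs. Qed.

Definition pe (P : m2 d) (i j : bool) :=
  if i then (if j then e22 P else e21 P) else (if j then e12 P else e11 P).

Definition bv (b dd : bool) : 'rV[F]_4 :=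
  match b, dd with
  | false, false => mk4 0 0 1 0
  | true, true => mk4 0 0 0 1
  | false, true => mk4 (2^-1) (2^-1 / s) 0 0
  | true, false => mk4 (2^-1) (- (2^-1 / s)) 0 0
  end.

Lemma inL_bv b dd : inL v d (bv b dd).
Proof.
case: b; case: dd; rewrite /bv ?inL_E11 ?inL_E22 //;
 rewrite /inL !cf_mk4 (inOK_split Hv hs) /intF !vge0 ?andbT.
- have -> : 2^-1 + - (2^-1 / s) * s = 0 by field; rewrite s0 two0.
  have -> : 2^-1 - - (2^-1 / s) * s = 1 by field; rewrite s0 two0.
  by rewrite vge0 vge1.
- have -> : 2^-1 + (2^-1 / s) * s = 1 by field; rewrite s0 two0.
  have -> : 2^-1 - (2^-1 / s) * s = 0 by field; rewrite s0 two0.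
  by rewrite vge0 vge1.
Qed.

Lemma act_bv P lam b dd i k : lam != 0 ->
  pi1 s (pe (act0 P lam (herm d (bv b dd))) i k) = lam^-1 * (pi1 s (pe P i b) * pi1 s (kconj (pe P k dd))).
Proof.
move=> l0.
case: b; case: dd; case: i; case: k;
  rewrite /act0 /herm /mscale /mmul /mstar /pe /bv /= !cf_mk4 /pi1 /kF /kconj ?(kE1s, kE2, kaddE1, kaddE2, koppE1, koppE2) /=;
  by field; rewrite ?s0 ?two0 ?l0.
Qed.

Lemma int_pe w i k : inL v d w -> intF v (pi1 s (pe (herm d w) i k)).
Proof.
rewrite /inL (inOK_split Hv hs) => /and3P [/andP [h0 h1] h2 h3].
by case: i; case: k; rewrite /pe /herm /pi1 /kF /kconj /= ?mul0r ?addr0 ?mulNr.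
Qed.

Lemma hard_split l : all (fun a => qform d a != 0) l -> ~~ odd (size l) ->
  (forall w, inL v d w -> inL v d (foldr (refl d) w l)) ->
  exists k, v (\prod_(a <- l) qform d a) = k + k.
Proof.
move=> hl hev hL.
have [P [dP l0 hP]] := hard_setup hl hev.
set lam := \prod_(a <- l) qform d a in dP l0 hP *.
have key : forall i b k dd, intF v (lam^-1 * (pi1 s (pe P i b) * pi1 s (kconj (pe P k dd)))).
  move=> i b k dd; rewrite -(act_bv P b dd i k l0) -hP; apply: int_pe; apply: hL; apply: inL_bv.
have dX : pi1 s (e11 P) * pi1 s (e22 P) - pi1 s (e12 P) * pi1 s (e21 P) = lam.
  have : pi1 s (mdet P) = lam by rewrite dP pi1F.
  by rewrite /mdet pi1B !(pi1M hs).
have dY : pi1 s (kconj (e11 P)) * pi1 s (kconj (e22 P)) - pi1 s (kconj (e12 P)) * pi1 s (kconj (e21 P)) = lam.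
  have : pi1 s (kconj (mdet P)) = lam by rewrite dP kconjF pi1F.
  by rewrite /mdet kconjB !kconjM pi1B !(pi1M hs).
apply: (split_core Hv l0 dX dY).
move=> x y; rewrite !inE => /or4P [] /eqP -> /or4P [] /eqP ->;
  first [ exact: (key false false false false) | exact: (key false false false true) | exact: (key false false true false) | exact: (key false false true true) | exact: (key false true false false) | exact: (key false true false true) | exact: (key false true true false) | exact: (key false true true true) | exact: (key true false false false) | exact: (key true false false true) | exact: (key true false true false) | exact: (key true false true true) | exact: (key true true false false) | exact: (key true true false true) | exact: (key true true true false) | exact: (key true true true true) ].
Qed.

End Split.

End Hd.

Section Dt.
Variable R : comRingType.

Lemma det2 (A : 'M[R]_2) : \det A = A 0 0 * A 1 1 - A 0 1 * A 1 0.
Proof.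
rewrite (expand_det_row _ 0) !big_ord_recr big_ord0 /= add0r.
rewrite /cofactor !det_mx11 !mxE /=.
have -> : (lift 0 0 : 'I_2) = 1 by apply: val_inj.
have -> : (lift (ord_max : 'I_2) 0 : 'I_2) = 0 by apply: val_inj.
have -> : (widen_ord (leqnSn 1) ord_max : 'I_2) = 0 by apply: val_inj.
have -> : (lift 0 0 : 'I_2) = 1 by apply: val_inj.
have -> : (ord_max : 'I_2) = 1 by apply: val_inj.
rewrite /= expr0 expr1; ring.
Qed.

Lemma det4 (g : 'M[R]_4) :
  (forall (i j : 'I_4), ((i < 2) != (j < 2))%N -> g i j = 0) ->
  \det g = (g 0 0 * g 1 1 - g 0 1 * g 1 0) * (g 2 2 * g 3 3 - g 2 3 * g 3 2).
Proof.
move=> h0.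
have e : (g : 'M_(2 + 2)) = block_mx (ulsubmx (g : 'M_(2+2))) 0 0 (drsubmx (g : 'M_(2+2))).
  rewrite -{1}(submxK (g : 'M_(2+2))); congr block_mx; apply/matrixP => i j; rewrite !mxE h0 //=.
    by case: i j => [i hi] [j hj] /=; rewrite hi; case: j hj.
  by case: i j => [i hi] [j hj] /=; rewrite hj; case: i hi.
rewrite (_ : \det g = @determinant _ (2+2) g) // {1}e det_ublock !det2 !mxE.
have E : forall (a : 'I_4) (b : 'I_4), val a = val b -> g a = g b by move=> a b /val_inj ->.
by congr (_ * _); congr (_ * _ - _ * _); congr (g _ _); apply: val_inj.
Qed.
End Dt.

Section Cn.
Variable F : fieldType.
Variable d : F.
Hypothesis two0 : (2 : F) != 0.

Definition mat4 (rows : seq (seq F)) : 'M[F]_4 :=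
  \matrix_(i < 4, j < 4) nth 0 (nth [::] rows i) j.

Lemma cf_mul (w : 'rV[F]_4) rows k : (k < 4)%N ->
  cf (w *m mat4 rows) k = \sum_(i < 4) cf w i * nth 0 (nth [::] rows i) k.
Proof.
move=> hk; rewrite /cf !mxE; apply: eq_bigr => i _; rewrite /mat4 mxE inordK //.
by rewrite inord_val.
Qed.

Lemma row_cf (x y : 'rV[F]_4) : (forall k, (k < 4)%N -> cf x k = cf y k) -> x = y.
Proof.
move=> h; apply/rowP => j; have := h j (ltn_ord j); by rewrite /cf inord_val.
Qed.

Lemma qform_refl a w : qform d a != 0 -> qform d (refl d a w) = qform d w.
Proof.
move=> qa; rewrite /qform !(refl_cf two0 _ _ qa) /bf /normK.
rewrite /qform /normK in qa *; field; exact: qa.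
Qed.

Lemma qform_foldr s w : all (fun a => qform d a != 0) s -> qform d (foldr (refl d) w s) = qform d w.
Proof.
elim: s => [|a s IH] //= /andP [qa hs]; by rewrite qform_refl // IH.
Qed.

Variables (m1 m2 u : F).
Hypothesis n0 : normK d m1 m2 != 0.
Hypothesis u0 : u != 0.
Definition nrm := normK d m1 m2.
Definition nu1 := (m1 ^+ 2 + d * m2 ^+ 2) / nrm.
Definition nu2 := 2 * m1 * m2 / nrm.

Definition gC : 'M[F]_4 := mat4 [:: [:: - nu1; - nu2; 0; 0]; [:: d * nu2; nu1; 0; 0];
                                   [:: 0; 0; 0; u]; [:: 0; 0; u^-1; 0]].
Definition sC : seq 'rV[F]_4 := [:: mk4 m1 m2 0 0; mk4 0 0 1 (- u)].

Lemma qb_eq : qform d (mk4 0 0 1 (- u)) = u.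
Proof. by rewrite /qform !cf_mk4 /normK; ring. Qed.
Lemma qa_eq : qform d (mk4 m1 m2 0 0) = nrm.
Proof. by rewrite /qform !cf_mk4 /nrm; ring. Qed.

Lemma sC_q : all (fun a => qform d a != 0) sC.
Proof. by rewrite /sC /= qa_eq qb_eq n0 u0. Qed.

Lemma sC_prod : \prod_(a <- sC) qform d a = nrm * u.
Proof. by rewrite /sC !big_cons big_nil mulr1 qa_eq qb_eq. Qed.

Lemma gC_mul w : w *m gC = foldr (refl d) w sC.
Proof.
have qa : qform d (mk4 m1 m2 0 0) != 0 by rewrite qa_eq.
have qb : qform d (mk4 0 0 1 (- u)) != 0 by rewrite qb_eq.
have n0' : m1 ^+ 2 - d * m2 ^+ 2 != 0 := n0.
apply: row_cf => k hk; rewrite cf_mul // !big_ord_recr big_ord0 /= add0r.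
rewrite /sC /=.
case: k hk => [|[|[|[|k]]]] //= _; rewrite (refl_cf two0 _ _ qa) /bf !(refl_cf two0 _ _ qb) /bf ?qb_eq ?qa_eq ?cf_mk4;
  rewrite /nu1 /nu2 /nrm /normK; field; by rewrite ?u0 ?n0'.
Qed.

Lemma gC_entries :
  forall i j : 'I_4, ((i < 2) != (j < 2))%N -> gC i j = 0.
Proof.
by move=> [[|[|[|[|i]]]] hi] [[|[|[|[|j]]]] hj] //= _; rewrite /gC /mat4 mxE.
Qed.

Lemma gC_det : \det gC = 1.
Proof.
have n0' : m1 ^+ 2 - d * m2 ^+ 2 != 0 := n0.
rewrite det4; last exact: gC_entries.
rewrite /gC /mat4 !mxE /= /nu1 /nu2 /nrm /normK; field; by rewrite ?n0' ?u0.
Qed.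

Lemma gC_unit : gC \in unitmx.
Proof. by rewrite unitmxE gC_det unitr1. Qed.

Lemma gC_q w : qform d (w *m gC) = qform d w.
Proof. by rewrite gC_mul qform_foldr // sC_q. Qed.

Lemma gC_cf w :
  [/\ cf (w *m gC) 0 = - nu1 * cf w 0 + d * nu2 * cf w 1, cf (w *m gC) 1 = - nu2 * cf w 0 + nu1 * cf w 1,
      cf (w *m gC) 2 = u^-1 * cf w 3 & cf (w *m gC) 3 = u * cf w 2].
Proof.
rewrite !cf_mul // !big_ord_recr !big_ord0 /= !add0r.
by split; ring.
Qed.

End Cn.

Section Fn.
Variable F : fieldType.
Variable v : F -> int.
Hypothesis Hv : is_dval v.
Hypothesis Hc : v_complete v.
Variable d : F.
Hypothesis two0 : (2 : F) != 0.
Hypothesis d0 : d != 0.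

Lemma vge_unit u c n : u != 0 -> v u = 0 -> vge v (u * c) n = vge v c n.
Proof.
move=> u0 vu; case: (eqVneq c 0) => [->|c0]; first by rewrite mulr0 !vge0.
by rewrite !vgeE ?mulf_neq0 // vM // vu add0r.
Qed.

Lemma construct m1 m2 u y :
  normK d m1 m2 != 0 ->
  (forall a b, in_OK v d (- nu1 d m1 m2 * a + d * nu2 d m1 m2 * b) (- nu2 d m1 m2 * a + nu1 d m1 m2 * b) = in_OK v d a b) ->
  unitF v u -> y != 0 -> sn_image d (SOL v d) (normK d m1 m2 * u * y ^+ 2).
Proof.
move=> n0 hnu /andP [u0 /eqP vu] y0.
split; first by rewrite !mulf_neq0 ?expf_neq0.
exists (gC d m1 m2 u); split.
  split; last exact: gC_det.
  split; first exact: gC_unit.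
    by move=> w; apply: gC_q.
  move=> w; have [h0 h1 h2 h3] := gC_cf d m1 m2 u w.
  have vu' : v u^-1 = 0 by rewrite vV // vu oppr0.
  rewrite /inL h0 h1 h2 h3 hnu /intF (vge_unit _ _ (invr_neq0 u0) vu') (vge_unit _ _ u0 vu).
  by case: (in_OK _ _ _ _); case: (vge v (cf w 2) 0); case: (vge v (cf w 3) 0).
exists (sC m1 m2 u); split.
- exact: sC_q.
- by move=> w; rewrite gC_mul.
- by exists y; split => //; rewrite sC_prod.
Qed.

Lemma construct1 u y : unitF v u -> y != 0 -> sn_image d (SOL v d) (u * y ^+ 2).
Proof.
move=> hu y0.
have n1 : normK d 1 0 = 1 by rewrite /normK; ring.
have := @construct 1 0 u y; rewrite n1 mul1r; apply => //; first by rewrite oner_neq0.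
move=> a b.
have -> : nu1 d 1 0 = 1 by rewrite /nu1 /nrm n1 invr1; ring.
have -> : nu2 d 1 0 = 0 by rewrite /nu2 /nrm n1 invr1; ring.
rewrite /in_OK /traceK /intF; congr andb.
  by rewrite (_ : 2 * _ = - (2 * a)) ?vgeN //; ring.
by congr vge; rewrite /normK; ring.
Qed.

Lemma hnu_field m1 m2 : K_is_field d -> normK d m1 m2 != 0 -> forall a b,
  in_OK v d (- nu1 d m1 m2 * a + d * nu2 d m1 m2 * b) (- nu2 d m1 m2 * a + nu1 d m1 m2 * b) = in_OK v d a b.
Proof.
move=> Kf n0 a b; rewrite !(inOK_field Hv Hc Kf two0); congr intF.
have n0' : m1 ^+ 2 - d * m2 ^+ 2 != 0 := n0.
rewrite /nu1 /nu2 /nrm /normK; field; exact: n0'.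
Qed.

Definition b1 : 'rV[F]_4 := mk4 0 0 1 (-1).

Lemma b1_q : qform d b1 = 1.
Proof. by rewrite /b1 /qform !cf_mk4 /normK; ring. Qed.

Lemma inL_b1 w : inL v d (refl d b1 w) = inL v d w.
Proof.
have qb : qform d b1 != 0 by rewrite b1_q oner_neq0.
rewrite /inL !(refl_cf two0 _ _ qb) /bf b1_q /b1 !cf_mk4.
rewrite (_ : cf w 0 - _ = cf w 0); last by ring.
rewrite (_ : cf w 1 - _ = cf w 1); last by ring.
rewrite (_ : cf w 2 - _ = cf w 3); last by rewrite ?divr1; ring.
rewrite (_ : cf w 3 - _ = cf w 2); last by rewrite ?divr1; ring.
by case: (in_OK _ _ _ _); case: (intF v (cf w 2)); case: (intF v (cf w 3)).
Qed.

Lemma pad s g : all (fun a => qform d a != 0) s ->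
  (forall w, w *m g = foldr (refl d) w s) -> (forall x, inL v d (x *m g) = inL v d x) ->
  exists l, [/\ all (fun a => qform d a != 0) l, ~~ odd (size l),
     \prod_(a <- l) qform d a = \prod_(a <- s) qform d a &
     forall w, inL v d w -> inL v d (foldr (refl d) w l)].
Proof.
move=> hs hg hL.
case ho: (odd (size s)); last first.
  by exists s; split => // [|w hw]; [rewrite ho | rewrite -hg hL].
exists (rcons s b1); split.
- by rewrite all_rcons b1_q oner_neq0.
- by rewrite size_rcons /= ho.
- by rewrite -cats1 big_cat big_seq1 b1_q; apply: mulr1.
- by move=> w hw; rewrite foldr_rcons -hg hL inL_b1.
Qed.

Lemma odd_abs_par (z : int) : odd `|z|%N -> exists j, z = j + j + 1.
Proof.
have [j [e|o]] := parity z; last by exists j.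
rewrite e => h; exfalso; move: h.
have -> : absz (j + j) = (absz j + absz j)%N by lia.
by rewrite addnn odd_double.
Qed.

Lemma hard x : ~ K_ramified v d -> sn_image d (OL v d) x ->
  exists u y : F, [/\ unitF v u, y != 0 & x = u * y ^+ 2].
Proof.
move=> nR [x0 [g [[_ _ hL] [s [hs hg [y [y0 ex]]]]]]].
have [l [hl hev hp hL']] := pad hs hg hL.
have [k hk] : exists k, v (\prod_(a <- l) qform d a) = k + k.
  case: (classic (K_is_field d)) => Kf.
    apply: (hard_field Hv Hc two0 Kf) => // a b hab; apply/negP => ho; apply: nR.
    by split => //; exists a, b.
  have [t ht] : exists t, t ^+ 2 = d.
    by apply: NNPP => h; apply: Kf => -[t ht]; apply: h; exists t.
  have t0 : t != 0 by apply: contraNN d0 => /eqP t0; rewrite -ht t0 expr0n.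
  exact: (hard_split Hv two0 ht t0).
rewrite hp in hk.
set lam := \prod_(a <- s) qform d a in ex hk.
have l0 : lam != 0 by apply: contraNN x0 => /eqP l0; rewrite ex l0 mul0r.
have [t [t0 vt]] := exists_v Hv k.
exists (lam / t ^+ 2), (t * y); split.
- rewrite /unitF mulf_neq0 ?invr_eq0 ?expf_neq0 //= vM ?invr_eq0 ?expf_neq0 // vV ?expf_neq0 // vX // vt hk.
  by apply/eqP; rewrite mulr2n; lia.
- by rewrite mulf_neq0.
- by rewrite ex; field.
Qed.

Lemma ram_all x : K_ramified v d -> x != 0 -> sn_image d (SOL v d) x.
Proof.
move=> [Kf [a [b [hab ho]]]] x0.
have n0 : normK d a b != 0.
  apply/negP => /eqP /(normK_eq0 Kf) [a0 b0]; by case: hab; rewrite ?a0 ?b0 eqxx.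
have [k [e|o]] := parity (v x).
  have [t [t0 vt]] := exists_v Hv k.
  have -> : x = (x / t ^+ 2) * t ^+ 2 by field.
  apply: construct1 => //; rewrite /unitF mulf_neq0 ?invr_eq0 ?expf_neq0 //=.
  by rewrite vM ?invr_eq0 ?expf_neq0 // vV ?expf_neq0 // vX // vt e; apply/eqP; rewrite mulr2n; lia.
have [j hj] := odd_abs_par ho.
have [t [t0 vt]] := exists_v Hv (k - j).
have -> : x = normK d a b * (x / (normK d a b * t ^+ 2)) * t ^+ 2 by field; rewrite n0 t0.
apply: construct => //; first exact: hnu_field.
rewrite /unitF mulf_neq0 ?invr_eq0 ?mulf_neq0 ?expf_neq0 //=.
rewrite vM ?invr_eq0 ?mulf_neq0 ?expf_neq0 // vV ?mulf_neq0 ?expf_neq0 // vM ?expf_neq0 //.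
by rewrite vX // vt o hj; apply/eqP; rewrite mulr2n; lia.
Qed.

Lemma SOL_OL x : sn_image d (SOL v d) x -> sn_image d (OL v d) x.
Proof. by move=> [x0 [g [[hg _] hs]]]; split => //; exists g. Qed.

End Fn.

Unset Implicit Arguments.

Theorem lemma2p4 (F : fieldType) (v : F -> int) (d : F) :
  nonarch_local_field v -> (2 : F) != 0 -> d != 0 ->
  (forall x : F, sn_image d (OL v d) x <-> sn_image d (SOL v d) x) /\
  (K_ramified v d -> forall x : F, sn_image d (OL v d) x <-> x != 0) /\
  (~ K_ramified v d -> forall x : F,
      sn_image d (OL v d) x <-> exists u y : F, [/\ unitF v u, y != 0 & x = u * y ^+ 2]).
Proof.
move=> [Hv Hc _] two0 d0.
have C : ~ K_ramified v d -> forall x : F,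
    sn_image d (OL v d) x <-> exists u y : F, [/\ unitF v u, y != 0 & x = u * y ^+ 2].
  move=> nR x; split; first by move=> h; exact: (@hard F v Hv Hc d two0 d0 x nR h).
  by move=> [u [y [hu y0 ->]]]; apply: SOL_OL; apply: (@construct1 F v Hv d two0).
split; last split.
- move=> x; split; last exact: SOL_OL.
  case: (classic (K_ramified v d)) => R.
    by move=> [x0 h]; apply: (@ram_all F v Hv Hc d two0 d0 x R).
  move=> h; have [u [y [hu y0 ->]]] := @hard F v Hv Hc d two0 d0 x R h.
  exact: (@construct1 F v Hv d two0).
- move=> R x; split; first by case.
  by move=> x0; apply: SOL_OL; apply: (@ram_all F v Hv Hc d two0 d0 x R).
- exact: C.
Qed.
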